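(* Let $(X,\Sigma,\mu)$ be a measure space, $n\ge1$, $\mathbb{F}\in\{\mathbb{R},\mathbb{C}\}$, $h\in L^2(X,\mu;\mathbb{F})$, and define $T:L^2(X,\mu;\mathbb{F}^n)\to\mathbb{F}^n$ by $T(F)=\int_X h(x)f_x\,d\mu(x)$ for $F=(f_x)_{x\in X}$. Suppose there is a measurable subset $Y\subseteq X$ such that $\dim L^2(Y,\mu;\mathbb{F})\ge n$ and $\mu\big((X\setminus Y)\cap h^{-1}(\mathbb{F}\setminus\{0\})\big)>0$. Then for every $d\in\mathbb{F}^n$, $T^{-1}(\{d\})$ contains a continuous frame $\Phi\in\mathcal{F}^{\mathbb{F}}_{(X,\mu),n}$.
   Context: A family $\Phi=(\varphi_x)_{x\in X}$ in $\mathbb{F}^n$ (with measurable coordinates) is a continuous frame indexed by $(X,\mu)$ if there are $0<A\le B$ with $A\|v\|^2\le\int_X|\langle v,\varphi_x\rangle|^2d\mu(x)\le B\|v\|^2$ for all $v\in\mathbb{F}^n$. $\mathcal{F}^{\mathbb{F}}_{(X,\mu),n}$ denotes the set of such frames, viewed as a subset of $L^2(X,\mu;\mathbb{F}^n)$. $L^2(Y,\mu;\mathbb{F})$ is the $L^2$ space of the restriction of $\mu$ to $Y$. *)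

(* Defs.v *)
From HB Require Import structures.
From mathcomp Require Import all_boot all_order all_algebra.
From mathcomp Require Import all_classical all_reals all_analysis.
From mathcomp Require complex.
Import complex.ComplexField.
Set Implicit Arguments. Unset Strict Implicit. Unset Printing Implicit Defensive.
Import Order.TTheory GRing.Theory Num.Theory.
Local Open Scope classical_set_scope.
Local Open Scope ring_scope.

(* A scalar field F in {R, C}, presented through its real coordinates
   (real part, imaginary part) and its conjugation. *)
Record scalars (R : realType) := Scalars {
  sF :> comNzRingType;
  sre : sF -> R;
  sim : sF -> R;
  scj : sF -> sF }.

Definition RealScalars (R : realType) : scalars R :=
  @Scalars R R id (fun _ => 0) id.

Definition ComplexScalars (R : realType) : scalars R :=
  @Scalars R (complex.complex R) (@complex.Re R) (@complex.Im R) (@complex.conjc R).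

Definition field_of (R : realType) (b : bool) : scalars R :=
  if b then ComplexScalars R else RealScalars R.

Section Defs.
Context (R : realType) (S : scalars R).

Definition absq (z : S) : R := sre z ^+ 2 + sim z ^+ 2.

Definition inner n (v w : 'I_n -> S) : S := \sum_(j < n) v j * scj (w j).

Definition normsq n (v : 'I_n -> S) : R := \sum_(j < n) absq (v j).

Context (d : measure_display) (X : measurableType d)
        (mu : {measure set X -> \bar R}).

Definition Fmeasurable (f : X -> S) : Prop :=
  measurable_fun setT (@sre R S \o f) /\ measurable_fun setT (@sim R S \o f).

Definition in_L2_on (D : set X) (f : X -> S) : Prop :=
  Fmeasurable f /\ (\int[mu]_(x in D) (absq (f x))%:E < +oo)%E.

(* dim L^2(Y, mu; F) >= n : there are n elements of L^2(Y,mu;F) that are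
   linearly independent over F (as classes modulo mu-a.e. equality on Y) *)
Definition L2_dim_ge (Y : set X) (n : nat) : Prop :=
  exists g : 'I_n -> X -> S,
    (forall i, in_L2_on Y (g i)) /\
    (forall c : 'I_n -> S,
        {ae mu, forall x, Y x -> \sum_(i < n) c i * g i x = 0} ->
        forall i, c i = 0).

Definition continuous_frame n (phi : X -> 'I_n -> S) : Prop :=
  (forall i, Fmeasurable (fun x => phi x i)) /\
  exists A B : R, 0 < A /\ A <= B /\
    forall v : 'I_n -> S,
      ((A * normsq v)%:E <= \int[mu]_x (absq (inner v (phi x)))%:E)%E /\
      (\int[mu]_x (absq (inner v (phi x)))%:E <= (B * normsq v)%:E)%E.

(* T(Phi) = int_X h(x) phi_x dmu(x) = dv (componentwise, real and imaginary
   parts) *)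
Definition T_eq n (h : X -> S) (phi : X -> 'I_n -> S) (dv : 'I_n -> S) : Prop :=
  forall i,
    (\int[mu]_x (sre (h x * phi x i))%:E = (sre (dv i))%:E)%E /\
    (\int[mu]_x (sim (h x * phi x i))%:E = (sim (dv i))%:E)%E.

End Defs.

(* Main.v *)
Require Import Defs.
From HB Require Import structures.
From mathcomp Require Import all_boot all_order all_algebra.
From mathcomp Require Import all_classical all_reals all_analysis.
From mathcomp Require Import ring lra.
From mathcomp Require complex.
Import Order.TTheory GRing.Theory Num.Theory.
Import measurable_realfun.
Set Implicit Arguments. Unset Strict Implicit. Unset Printing Implicit Defensive.
Local Open Scope classical_set_scope.
Local Open Scope ring_scope.

Section Alg.
Variable R : realType.

Definition nsq m (x : 'I_m -> R) := \sum_(i < m) x i ^+ 2.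
Definition qf m (M : 'I_m -> 'I_m -> R) (x : 'I_m -> R) :=
  \sum_(i < m) \sum_(j < m) x i * x j * M i j.

Lemma nsq_ge0 m (x : 'I_m -> R) : 0 <= nsq x.
Proof. by apply: sumr_ge0 => i _; exact: sqr_ge0. Qed.

Lemma CS m (u v : 'I_m -> R) :
  (\sum_(i < m) u i * v i) ^+ 2 <= nsq u * nsq v.
Proof.
set W := \sum_(i < m) _.
have [U0|U0] := eqVneq (nsq u) 0.
  have u0 : forall i, u i = 0.
    move=> i; move/eqP: U0; rewrite psumr_eq0; last by move=> j _; exact: sqr_ge0.
    by move/allP => /(_ i (mem_index_enum _)) /=; rewrite sqrf_eq0 => /eqP.
  rewrite /W big1 ?expr0n ?U0 ?mul0r // => i _; by rewrite u0 mul0r.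
have Upos : 0 < nsq u by rewrite lt0r U0 nsq_ge0.
set t := W / nsq u.
have H : 0 <= \sum_(i < m) (t * u i - v i) ^+ 2 by apply: sumr_ge0 => i _; exact: sqr_ge0.
have E : \sum_(i < m) (t * u i - v i) ^+ 2 = t ^+ 2 * nsq u - 2 * t * W + nsq v.
  rewrite /nsq /W mulr_sumr mulr_sumr -sumrB -big_split /=.
  by apply: eq_bigr => i _; ring.
rewrite E /t in H.
have : 0 <= nsq v - W ^+ 2 / nsq u.
  move: H; set U := nsq u.
  have -> : (W / U) ^+ 2 * U - 2 * (W / U) * W + nsq v = nsq v - W ^+ 2 / U.
    by field; rewrite /U.
  by [].
rewrite subr_ge0 ler_pdivrMr // => h.
by rewrite mulrC.
Qed.


Definition consf m (x0 : R) (x' : 'I_m -> R) : 'I_m.+1 -> R :=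
  fun i => if unlift ord0 i is Some j then x' j else x0.

Lemma consf0 m x0 (x' : 'I_m -> R) : consf x0 x' ord0 = x0.
Proof. by rewrite /consf unlift_none. Qed.
Lemma consfS m x0 (x' : 'I_m -> R) j : consf x0 x' (lift ord0 j) = x' j.
Proof. by rewrite /consf liftK. Qed.

Lemma qf_decomp m (M : 'I_m.+1 -> 'I_m.+1 -> R) (x : 'I_m.+1 -> R) :
  (forall i j, M i j = M j i) ->
  qf M x = x ord0 ^+ 2 * M ord0 ord0
    + 2 * x ord0 * (\sum_(j < m) x (lift ord0 j) * M ord0 (lift ord0 j))
    + qf (fun i j => M (lift ord0 i) (lift ord0 j)) (fun j => x (lift ord0 j)).
Proof.
move=> Ms; rewrite /qf big_ord_recl /= big_ord_recl /=.
under [X in _ + X = _]eq_bigr do rewrite big_ord_recl /=.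
rewrite big_split /=.
have -> : \sum_(i < m) x (lift ord0 i) * x ord0 * M (lift ord0 i) ord0 =
   \sum_(i < m) x ord0 * (x (lift ord0 i) * M ord0 (lift ord0 i)).
  by apply: eq_bigr => i _; rewrite Ms; ring.
have -> : \sum_(i < m) x ord0 * x (lift ord0 i) * M ord0 (lift ord0 i) =
   \sum_(i < m) x ord0 * (x (lift ord0 i) * M ord0 (lift ord0 i)).
  by apply: eq_bigr => i _; ring.
rewrite -mulr_sumr; ring.
Qed.

Lemma AL m (M : 'I_m -> 'I_m -> R) :
  (forall i j, M i j = M j i) ->
  (forall x, 0 <= qf M x) ->
  (forall x, qf M x = 0 -> forall k, x k = 0) ->
  exists2 A, 0 < A & forall x, A * nsq x <= qf M x.
Proof.
elim: m M => [|m IH] M Ms Mpsd Mdef.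
  exists 1 => // x; rewrite /nsq /qf !big_ord0 mul1r //.
pose a := M ord0 ord0.
pose b j := M ord0 (lift ord0 j).
pose M' i j := M (lift ord0 i) (lift ord0 j) - b i * b j / a.
have e0 : qf M (consf 1 (fun _ => 0)) = a.
  rewrite qf_decomp // consf0 /qf.
  under eq_bigr do rewrite consfS mul0r.
  rewrite big1 ?mulr0 ?addr0; last by [].
  rewrite big1 ?addr0 ?expr1n ?mul1r //.
  by move=> i _; apply: big1 => j _; rewrite !consfS !mul0r.
have a_pos : 0 < a.
  rewrite lt0r -e0 Mpsd andbT; apply/eqP => /Mdef /(_ ord0).
  by rewrite consf0 => /eqP; rewrite oner_eq0.
have aN0 : a != 0 by rewrite gt_eqF.
have key : forall x, qf M x = a * (x ord0 + (\sum_(j < m) x (lift ord0 j) * b j) / a) ^+ 2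
    + qf M' (fun j => x (lift ord0 j)).
  move=> x; rewrite qf_decomp //.
  have -> : qf M' (fun j => x (lift ord0 j)) =
     qf (fun i j => M (lift ord0 i) (lift ord0 j)) (fun j => x (lift ord0 j))
     - (\sum_(j < m) x (lift ord0 j) * b j) ^+ 2 / a.
    rewrite /qf expr2 mulr_suml mulr_suml -sumrB; apply: eq_bigr => i _.
    rewrite mulr_sumr mulr_suml -sumrB; apply: eq_bigr => j _.
    rewrite /M'; field; exact: aN0.
  rewrite -/a; set s := \sum_(j < m) _.
  by field; exact: aN0.
have M's : forall i j, M' i j = M' j i.
  by move=> i j; rewrite /M' (Ms (lift ord0 i)) (mulrC (b i)).
have cx : forall x0 (x' : 'I_m -> R), (fun j => consf x0 x' (lift ord0 j)) = x'.
  by move=> x0 x'; apply: funext => j; rewrite consfS.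
have M'psd : forall x', 0 <= qf M' x'.
  move=> x'; set s := \sum_(j < m) x' j * b j.
  have := Mpsd (consf (- s / a) x'); rewrite key consf0 cx.
  under eq_bigr do rewrite consfS.
  by rewrite -/s mulNr addNr expr0n /= mulr0 add0r.
have M'def : forall x', qf M' x' = 0 -> forall k, x' k = 0.
  move=> x' H k; set s := \sum_(j < m) x' j * b j.
  have := Mdef (consf (- s / a) x'); rewrite key consf0 cx.
  under eq_bigr do rewrite consfS.
  rewrite -/s mulNr addNr expr0n /= mulr0 add0r.
  by move=> /(_ H (lift ord0 k)); rewrite consfS.
have [A' A'pos HA'] := IH M' M's M'psd M'def.
pose C := nsq b / a ^+ 2.
have C0 : 0 <= C by rewrite /C divr_ge0 ?nsq_ge0 ?sqr_ge0.
pose A := Num.min (a / 2) (A' / (2 * C + 1)).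
have Apos : 0 < A by rewrite lt_min divr_gt0 // divr_gt0 //; lra.
have Aa : A <= a / 2 by rewrite ge_min lexx.
have AA' : A * (2 * C + 1) <= A'.
  rewrite -ler_pdivlMr; last by lra.
  by rewrite ge_min lexx orbT.
exists A => // x.
set x' := fun j => x (lift ord0 j).
set s := \sum_(j < m) x (lift ord0 j) * b j.
set w := x ord0 + s / a.
have Hs : s ^+ 2 <= nsq b * nsq x'.
  rewrite /s (eq_bigr (fun j => b j * x' j)); last by move=> j _; rewrite mulrC.
  exact: CS.
have Hx0 : x ord0 ^+ 2 <= 2 * w ^+ 2 + 2 * C * nsq x'.
  have -> : x ord0 = w - s / a by rewrite /w addrK.
  have : (s / a) ^+ 2 <= C * nsq x'.
    have -> : (s / a) ^+ 2 = s ^+ 2 * (a ^+ 2)^-1 by rewrite exprMn exprVn.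
    have -> : C * nsq x' = nsq b * nsq x' * (a ^+ 2)^-1 by rewrite /C mulrAC.
    by apply: ler_wpM2r => //; rewrite invr_ge0 sqr_ge0.
  move: (sqr_ge0 (w + s / a)) => h1 h2.
  have h3 : (w - s / a) ^+ 2 <= 2 * w ^+ 2 + 2 * (s / a) ^+ 2.
    by move: h1; rewrite !expr2; lra.
  by apply: (le_trans h3); lra.
have Hnsq : nsq x = x ord0 ^+ 2 + nsq x' by rewrite /nsq big_ord_recl.
rewrite key Hnsq -/x' -/s -/w.
have := HA' x'; have := nsq_ge0 x'; have := sqr_ge0 w.
move: Hx0 Aa AA' Apos a_pos C0; clear; nra.
Qed.

End Alg.


Section Meas.
Variables (R : realType) (d : measure_display) (X : measurableType d)
  (mu : {measure set X -> \bar R}).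

Definition Int (f : X -> R) := mu.-integrable setT (EFin \o f).
Definition L2f (f : X -> R) := measurable_fun setT f /\ Int (fun x => f x ^+ 2).
Definition RI (f : X -> R) := fine (\int[mu]_x (f x)%:E).

Lemma intE f : Int f -> (\int[mu]_x (f x)%:E = (RI f)%:E)%E.
Proof. by move=> If; rewrite /RI fineK //; exact: integrable_fin_num. Qed.

Lemma Int_meas f : Int f -> measurable_fun setT f.
Proof. by move=> /measurable_int /measurable_EFinP. Qed.

Lemma Int_ext f g : (forall x, f x = g x) -> Int f -> Int g.
Proof. by move=> e; apply: eq_integrable => // x _ /=; rewrite e. Qed.

Lemma IntD f g : Int f -> Int g -> Int (fun x => f x + g x).
Proof.
move=> If Ig; have := integrableD measurableT If Ig.
by apply: eq_integrable => // x _.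
Qed.

Lemma IntZ c f : Int f -> Int (fun x => c * f x).
Proof.
move=> If; have := integrableZl measurableT c If.
by apply: eq_integrable => // x _.
Qed.

Lemma IntN f : Int f -> Int (fun x => - f x).
Proof. by move=> If; apply: Int_ext (IntZ (-1) If) => x; rewrite mulN1r. Qed.

Lemma IntB f g : Int f -> Int g -> Int (fun x => f x - g x).
Proof. by move=> If Ig; exact: IntD If (IntN Ig). Qed.

Lemma Int0 : Int (fun _ => 0).
Proof. exact: integrable0. Qed.

Lemma Int_sum m (F : 'I_m -> X -> R) : (forall k, Int (F k)) ->
  Int (fun x => \sum_(k < m) F k x).
Proof.
move=> IF; have := @integrable_sum _ _ _ mu setT measurableT _ (index_enum 'I_m) xpredT
  (fun k x => (F k x)%:E) (fun k _ => IF k).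
by apply: eq_integrable => // x _ /=; rewrite sumEFin.
Qed.

Lemma RID f g : Int f -> Int g -> RI (fun x => f x + g x) = RI f + RI g.
Proof.
move=> If Ig; rewrite /RI.
have -> : (\int[mu]_x (f x + g x)%:E = \int[mu]_x ((EFin \o f) \+ (EFin \o g)) x)%E by [].
by rewrite integralD_EFin // fineD //; exact: integrable_fin_num.
Qed.

Lemma RIZ c f : Int f -> RI (fun x => c * f x) = c * RI f.
Proof.
move=> If; rewrite /RI.
have -> : (\int[mu]_x (c * f x)%:E = \int[mu]_x (c%:E * (EFin \o f) x))%E by [].
rewrite integralZl //= fineM //; exact: integrable_fin_num.
Qed.

Lemma RI0 : RI (fun _ => 0) = 0.
Proof. by rewrite /RI integral0. Qed.

Lemma RI_sum m (F : 'I_m -> X -> R) : (forall k, Int (F k)) ->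
  RI (fun x => \sum_(k < m) F k x) = \sum_(k < m) RI (F k).
Proof.
elim: m F => [|m IH] F IF.
  by under eq_fun do rewrite big_ord0; rewrite big_ord0 RI0.
under eq_fun do rewrite big_ord_recl.
rewrite RID //; last by apply: Int_sum => k.
by rewrite IH // big_ord_recl.
Qed.

Lemma RI_ge0 f : (forall x, 0 <= f x) -> 0 <= RI f.
Proof. by move=> f0; apply: fine_ge0; apply: integral_ge0 => x _; rewrite lee_fin. Qed.

Lemma RI_ext f g : (forall x, f x = g x) -> RI f = RI g.
Proof. by move=> e; congr RI; apply: funext. Qed.

Lemma prod_bound (a b : R) : `|a * b| <= a ^+ 2 + b ^+ 2.
Proof.
rewrite normrM -(real_normK (num_real a)) -(real_normK (num_real b)).
have := normr_ge0 a; have := normr_ge0 b; nra.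
Qed.

Lemma L2_prod f g : L2f f -> L2f g -> Int (fun x => f x * g x).
Proof.
move=> [mf If] [mg Ig].
apply: (le_integrable measurableT _ _ (IntD If Ig)).
  by apply/measurable_EFinP; exact: measurable_funM.
move=> x _ /=; rewrite lee_fin (ger0_norm (addr_ge0 (sqr_ge0 _) (sqr_ge0 _))).
exact: prod_bound.
Qed.

Lemma L2D f g : L2f f -> L2f g -> L2f (fun x => f x + g x).
Proof.
move=> Lf Lg; split; first by apply: measurable_funD; [case: Lf|case: Lg].
have := IntD (IntD Lf.2 (IntZ 2 (L2_prod Lf Lg))) Lg.2.
by apply: Int_ext => x; ring.
Qed.

Lemma L2Z' c f : L2f f -> L2f (fun x => c * f x).
Proof.
move=> [mf If]; split.
  by apply: measurable_funM => //; exact: measurable_cst.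
by apply: Int_ext (IntZ (c ^+ 2) If) => x; ring.
Qed.

Lemma L2B f g : L2f f -> L2f g -> L2f (fun x => f x - g x).
Proof.
move=> Lf Lg; have := L2D Lf (L2Z' (-1) Lg).
by move=> H; have -> : (fun x => f x - g x) = (fun x => f x + (-1) * g x) by apply: funext => x; rewrite mulN1r.
Qed.

Lemma L2Z c f : L2f f -> L2f (fun x => c * f x).
Proof.
move=> [mf If]; split.
  by apply: measurable_funM => //; exact: measurable_cst.
by apply: Int_ext (IntZ (c ^+ 2) If) => x; ring.
Qed.

Lemma L20 : L2f (fun _ => 0).
Proof. split; first exact: measurable_cst. by apply: Int_ext Int0 => x; rewrite expr0n. Qed.

Lemma L2_sum m (F : 'I_m -> X -> R) : (forall k, L2f (F k)) ->
  L2f (fun x => \sum_(k < m) F k x).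
Proof.
elim: m F => [|m IH] F LF.
  have -> : (fun x => \sum_(k < 0) F k x) = (fun _ => 0) by apply: funext => x; rewrite big_ord0.
  exact: L20.
have -> : (fun x => \sum_(k < m.+1) F k x) =
  (fun x => F ord0 x + \sum_(k < m) F (lift ord0 k) x).
  by apply: funext => x; rewrite big_ord_recl.
exact: L2D (LF ord0) (IH _ (fun k => LF (lift ord0 k))).
Qed.

End Meas.


Lemma sqr_sum (R : realType) m (a : 'I_m -> R) :
  (\sum_(k < m) a k) ^+ 2 = \sum_(k < m) \sum_(l < m) a k * a l.
Proof. by rewrite expr2 mulr_suml; apply: eq_bigr => k _; rewrite mulr_sumr. Qed.

Section RL.
Variables (R : realType) (d : measure_display) (X : measurableType d)
  (mu : {measure set X -> \bar R}).

Lemma RL m (U V : 'I_m -> X -> R) :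
  (forall k, L2f mu (U k)) -> (forall k, L2f mu (V k)) ->
  (forall c : 'I_m -> R,
     {ae mu, forall x, \sum_(k < m) c k * U k x = 0 /\ \sum_(k < m) c k * V k x = 0} ->
     forall k, c k = 0) ->
  exists2 A, 0 < A & forall c : 'I_m -> R,
    ((A * nsq c)%:E <= \int[mu]_x (((\sum_(k < m) c k * U k x) ^+ 2
                                    + (\sum_(k < m) c k * V k x) ^+ 2)%:E))%E.
Proof.
move=> LU LV ind.
pose H k l x := U k x * U l x + V k x * V l x.
have IH : forall k l, Int mu (H k l).
  by move=> k l; apply: IntD; apply: L2_prod.
pose G k l := RI mu (H k l).
pose Q (c : 'I_m -> R) x := (\sum_(k < m) c k * U k x) ^+ 2 + (\sum_(k < m) c k * V k x) ^+ 2.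
have QE : forall c x, Q c x = \sum_(k < m) \sum_(l < m) c k * c l * H k l x.
  move=> c x; rewrite /Q !sqr_sum -big_split /=; apply: eq_bigr => k _.
  rewrite -big_split /=; apply: eq_bigr => l _; rewrite /H; ring.
have IQ : forall c, Int mu (Q c).
  move=> c; apply: Int_ext (fun x => esym (QE c x)) _.
  by apply: Int_sum => k; apply: Int_sum => l; apply: IntZ.
have RQ : forall c, RI mu (Q c) = qf G c.
  move=> c; rewrite (RI_ext mu (QE c)) RI_sum; last first.
    by move=> k; apply: Int_sum => l; apply: IntZ.
  apply: eq_bigr => k _; rewrite RI_sum; last by move=> l; apply: IntZ.
  by apply: eq_bigr => l _; rewrite RIZ.
have Gs : forall k l, G k l = G l k.
  by move=> k l; apply: RI_ext => x; rewrite /H; ring.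
have Q0 : forall c x, 0 <= Q c x by move=> c x; rewrite /Q addr_ge0 ?sqr_ge0.
have Gpsd : forall c, 0 <= qf G c by move=> c; rewrite -RQ; apply: RI_ge0.
have Gdef : forall c, qf G c = 0 -> forall k, c k = 0.
  move=> c qc0; apply: ind.
  have I0 : (\int[mu]_x `|(EFin \o Q c) x| = 0)%E.
    rewrite (eq_integral (fun x => (Q c x)%:E)); last first.
      by move=> x _ /=; rewrite ger0_norm ?Q0.
    by rewrite (intE (IQ c)) RQ qc0.
  have := (ae_eq_integral_abs mu measurableT (measurable_int mu (IQ c))).1 I0.
  apply: filterS => x /(_ I) /= [] qx.
  have : Q c x == 0 by rewrite qx.
  rewrite /Q paddr_eq0 ?sqr_ge0 // !sqrf_eq0 => /andP[/eqP -> /eqP ->]; by [].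
have [A Apos HA] := AL Gs Gpsd Gdef.
exists A => // c.
have -> : (\int[mu]_x (((\sum_(k < m) c k * U k x) ^+ 2
             + (\sum_(k < m) c k * V k x) ^+ 2)%:E) = (RI mu (Q c))%:E)%E.
  exact: (intE (IQ c)).
by rewrite RQ lee_fin.
Qed.

End RL.


Section Fld.
Variables (R : realType) (isC : bool).
Notation F := (field_of R isC).

Lemma sre_add (a b : F) : sre (a + b) = sre a + sre b.
Proof. by case: isC a b => [[a1 a2] [b1 b2]|a b]. Qed.
Lemma sim_add (a b : F) : sim (a + b) = sim a + sim b.
Proof. by case: isC a b => [[a1 a2] [b1 b2]|a b] //=; rewrite addr0. Qed.
Lemma sre0 : sre (0 : F) = 0.
Proof. by case: isC. Qed.
Lemma sim0 : sim (0 : F) = 0.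
Proof. by case: isC. Qed.
Lemma sre_mul (a b : F) : sre (a * b) = sre a * sre b - sim a * sim b.
Proof. by case: isC a b => [[a1 a2] [b1 b2]|a b] //=; rewrite mulr0 subr0. Qed.
Lemma sim_mul (a b : F) : sim (a * b) = sre a * sim b + sim a * sre b.
Proof. by case: isC a b => [[a1 a2] [b1 b2]|a b] //=; rewrite mulr0 mul0r addr0. Qed.
Lemma sre_scj (a : F) : sre (scj a) = sre a.
Proof. by case: isC a => [[a1 a2]|a]. Qed.
Lemma sim_scj (a : F) : sim (scj a) = - sim a.
Proof. by case: isC a => [[a1 a2]|a] //=; rewrite oppr0. Qed.
Lemma F_eq0 (a : F) : sre a = 0 -> sim a = 0 -> a = 0.
Proof. by case: isC a => [[a1 a2]|a] //= -> ->. Qed.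
Lemma F_mk (x y : R) : exists z : F, sre z = x /\ (sim z = y \/ forall u : F, sim u = 0).
Proof.
case: isC.
  by exists (complex.Complex x y); split => //; left.
by exists x; split => //; right.
Qed.

Lemma sre_sum m (f : 'I_m -> F) : sre (\sum_(k < m) f k) = \sum_(k < m) sre (f k).
Proof.
elim/big_ind2: _ => //; first exact: sre0.
by move=> a b c e <- <-; rewrite sre_add.
Qed.
Lemma sim_sum m (f : 'I_m -> F) : sim (\sum_(k < m) f k) = \sum_(k < m) sim (f k).
Proof.
elim/big_ind2: _ => //; first exact: sim0.
by move=> a b c e <- <-; rewrite sim_add.
Qed.

Lemma sre_inner n (v w : 'I_n -> F) :
  sre (inner v w) = \sum_(j < n) (sre (v j) * sre (w j) + sim (v j) * sim (w j)).
Proof.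
rewrite /inner sre_sum; apply: eq_bigr => j _.
by rewrite sre_mul sre_scj sim_scj; ring.
Qed.
Lemma sim_inner n (v w : 'I_n -> F) :
  sim (inner v w) = \sum_(j < n) (sim (v j) * sre (w j) - sre (v j) * sim (w j)).
Proof.
rewrite /inner sim_sum; apply: eq_bigr => j _.
by rewrite sim_mul sre_scj sim_scj; ring.
Qed.

End Fld.

Definition mkF (R : realType) (b : bool) : R -> R -> field_of R b :=
  match b as b0 return R -> R -> field_of R b0 with
  | true => fun x y => complex.Complex x y
  | false => fun x _ => x end.

Lemma sre_mkF (R : realType) (b : bool) (x y : R) : sre (mkF b x y) = x.
Proof. by case: b. Qed.
Lemma sim_mkF (R : realType) (b : bool) (x y : R) : b -> sim (mkF b x y) = y.
Proof. by case: b. Qed.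
Lemma sim_real (R : realType) (b : bool) (u : field_of R b) : ~~ b -> sim u = 0.
Proof. by case: b u. Qed.



Section Aux.
Variables (R : realType) (d : measure_display) (X : measurableType d)
  (mu : {measure set X -> \bar R}).

Lemma Int_of_fin (f : X -> R) : measurable_fun setT f -> (forall x, 0 <= f x) ->
  (\int[mu]_x (f x)%:E < +oo)%E -> Int mu f.
Proof.
move=> mf f0 fin; apply/integrableP; split; first exact/measurable_EFinP.
rewrite (eq_integral (fun x => (f x)%:E)) //.
by move=> x _ /=; rewrite ger0_norm.
Qed.

Lemma L2_split (f g : X -> R) : measurable_fun setT f -> measurable_fun setT g ->
  Int mu (fun x => f x ^+ 2 + g x ^+ 2) -> L2f mu f /\ L2f mu g.
Proof.
move=> mf mg I; split; split => //.
- apply: (le_integrable measurableT _ _ I).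
    by apply/measurable_EFinP; exact: measurable_funX.
  move=> x _ /=; rewrite lee_fin !ger0_norm ?addr_ge0 ?sqr_ge0 //.
  by rewrite lerDl sqr_ge0.
- apply: (le_integrable measurableT _ _ I).
    by apply/measurable_EFinP; exact: measurable_funX.
  move=> x _ /=; rewrite lee_fin !ger0_norm ?addr_ge0 ?sqr_ge0 //.
  by rewrite lerDr sqr_ge0.
Qed.

Lemma meas_patch (D : set X) (f : X -> R) : measurable D -> measurable_fun setT f ->
  measurable_fun setT (fun x => if x \in D then f x else 0).
Proof.
move=> mD mf; have := (measurable_restrictT f mD).1 (measurable_funS measurableT (subsetT D) mf).
by [].
Qed.

Lemma Int_patch (D : set X) (f : X -> R) : measurable D ->
  measurable_fun setT f -> (\int[mu]_(x in D) `|f x|%:E < +oo)%E ->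
  Int mu (fun x => if x \in D then f x else 0).
Proof.
move=> mD mf fin; apply/integrableP; split.
  by apply/measurable_EFinP; exact: meas_patch.
rewrite integral_mkcond in fin.
rewrite (eq_integral ((fun x => `|f x|%:E) \_ D)) //.
by move=> x _; rewrite /restrict /patch /=; case: (x \in D) => //=; rewrite normr0.
Qed.

End Aux.


Lemma split_l m n (j : 'I_m) : fintype.split (lshift n j) = inl j.
Proof. exact: (unsplitK (inl _ j)). Qed.
Lemma split_r m n (j : 'I_n) : fintype.split (rshift m j) = inr j.
Proof. exact: (unsplitK (inr _ j)). Qed.

Lemma bound4 (R : realType) n (p q r s : 'I_n -> R) :
  (\sum_(j < n) (p j * r j + q j * s j)) ^+ 2 + (\sum_(j < n) (q j * r j - p j * s j)) ^+ 2
  <= 2 * ((nsq p + nsq q) * (nsq r + nsq s)).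
Proof.
rewrite big_split sumrB /=.
have h1 := CS p r; have h2 := CS q s; have h3 := CS q r; have h4 := CS p s.
set A1 := \sum_(j < n) p j * r j in h1 *; set A2 := \sum_(j < n) q j * s j in h2 *.
set A3 := \sum_(j < n) q j * r j in h3 *; set A4 := \sum_(j < n) p j * s j in h4 *.
have e1 : (A1 + A2) ^+ 2 <= 2 * A1 ^+ 2 + 2 * A2 ^+ 2.
  have := sqr_ge0 (A1 - A2); rewrite !expr2; lra.
have e2 : (A3 - A4) ^+ 2 <= 2 * A3 ^+ 2 + 2 * A4 ^+ 2.
  have := sqr_ge0 (A3 + A4); rewrite !expr2; lra.
have -> : 2 * ((nsq p + nsq q) * (nsq r + nsq s)) =
  2 * (nsq p * nsq r) + 2 * (nsq q * nsq s) + 2 * (nsq q * nsq r) + 2 * (nsq p * nsq s) by ring.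
lra.
Qed.

Section Main.
Variables (R : realType) (isC : bool) (d : measure_display) (X : measurableType d)
  (mu : {measure set X -> \bar R}) (n : nat).
Notation F := (field_of R isC).
Variables (h : X -> F) (Y : set X) (g : 'I_n -> X -> F) (dv : 'I_n -> F).
Hypothesis hL2 : in_L2_on mu setT h.
Hypothesis mY : measurable Y.
Hypothesis Lg : forall i, in_L2_on mu Y (g i).
Hypothesis indg : forall c : 'I_n -> F,
  {ae mu, forall x, Y x -> \sum_(i < n) c i * g i x = 0} -> forall i, c i = 0.
Hypothesis hpos : (0 < mu (~` Y `&` [set x | (h x != 0)%R]))%E.

Let hr x := sre (h x).
Let hi x := sim (h x).
Let a i x := sre (g i x).
Let b i x := sim (g i x).
Let aY i x := if x \in Y then a i x else 0.
Let bY i x := if x \in Y then b i x else 0.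
Let Z := ~` Y `&` [set x | (h x != 0)%R].

Let mhr : measurable_fun setT hr. Proof. by case: hL2 => -[]. Qed.
Let mhi : measurable_fun setT hi. Proof. by case: hL2 => -[]. Qed.

Let Ih : Int mu (fun x => hr x ^+ 2 + hi x ^+ 2).
Proof.
apply: Int_of_fin.
- by apply: measurable_funD; apply: measurable_funX.
- by move=> x; rewrite addr_ge0 ?sqr_ge0.
- by case: hL2.
Qed.

Let Lh : L2f mu hr /\ L2f mu hi.
Proof. exact: L2_split mhr mhi Ih. Qed.

Let LabY i : L2f mu (aY i) /\ L2f mu (bY i).
Proof.
case: (Lg i) => -[ma mb] gfin.
apply: L2_split; try exact: meas_patch.
have : Int mu (fun x => if x \in Y then a i x ^+ 2 + b i x ^+ 2 else 0).
  apply: Int_patch => //; first by apply: measurable_funD; apply: measurable_funX.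
  rewrite (eq_integral (fun x => (absq (g i x))%:E)) //.
  by move=> x _; rewrite ger0_norm // addr_ge0 ?sqr_ge0.
apply: Int_ext => x; rewrite /aY /bY; case: (x \in Y) => //.
by rewrite expr0n addr0.
Qed.

Let habs x : h x != 0 -> 0 < hr x ^+ 2 + hi x ^+ 2.
Proof.
move=> hx; rewrite lt_neqAle addr_ge0 ?sqr_ge0 // andbT eq_sym.
rewrite paddr_eq0 ?sqr_ge0 // !sqrf_eq0; apply/negP => /andP[/eqP r0 /eqP i0].
by move/eqP: hx; apply; apply: F_eq0.
Qed.

Let mZ : measurable Z.
Proof.
apply: measurableI; first exact: measurableC.
have mq : measurable_fun setT (fun x => hr x ^+ 2 + hi x ^+ 2).
  by apply: measurable_funD; apply: measurable_funX.
have := mq measurableT [set~ (0:R)] (measurableC (measurable_set1 _)).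
rewrite setTI; congr measurable; apply/seteqP; split => x /=.
  move=> H; apply/eqP => h0; apply: H.
  by rewrite /hr /hi h0 sre0 sim0 expr0n addr0.
by move=> hx /eqP; rewrite gt_eqF //; apply: habs.
Qed.

Let zr x := if x \in Z then hr x else 0.
Let zi x := if x \in Z then hi x else 0.

Let Lz : L2f mu zr /\ L2f mu zi.
Proof.
apply: L2_split; try exact: meas_patch.
apply: (le_integrable measurableT _ _ Ih).
  apply/measurable_EFinP; apply: measurable_funD; apply: measurable_funX;
  exact: meas_patch.
move=> x _ /=; rewrite lee_fin !ger0_norm ?addr_ge0 ?sqr_ge0 //.
by rewrite /zr /zi; case: (x \in Z) => //; rewrite expr0n addr0 addr_ge0 ?sqr_ge0.
Qed.

Let zh x := hr x * zr x + hi x * zi x.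
Let zhE x : zh x = if x \in Z then hr x ^+ 2 + hi x ^+ 2 else 0.
Proof. by rewrite /zh /zr /zi; case: (x \in Z); rewrite ?mulr0 ?addr0 // !expr2. Qed.
Let zh0 x : 0 <= zh x.
Proof. by rewrite zhE; case: (x \in Z) => //; rewrite addr_ge0 ?sqr_ge0. Qed.
Let Izh : Int mu zh.
Proof. by apply: IntD; apply: L2_prod; [exact: Lh.1|exact: Lz.1|exact: Lh.2|exact: Lz.2]. Qed.

Let K := RI mu zh.
Let Kpos : 0 < K.
Proof.
have K0 : 0 <= K by apply: RI_ge0.
rewrite lt_neqAle K0 andbT; apply/negP => /eqP K0'.
have I0 : (\int[mu]_x `|(EFin \o zh) x| = 0)%E.
  rewrite (eq_integral (fun x => (zh x)%:E)); last by move=> x _ /=; rewrite ger0_norm.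
  by rewrite (intE Izh) -/K -K0'.
have := (ae_eq_integral_abs mu measurableT (measurable_int mu Izh)).1 I0.
case=> N [mN N0 sub].
have ZN : Z `<=` N.
  move=> x Zx; apply: sub => /= H; have := H I; rewrite /= zhE (mem_set Zx).
  by move=> [] /eqP; rewrite gt_eqF //; apply: habs; case: Zx.
have := le_measure mu (mem_set mZ) (mem_set mN) ZN.
move=> H; have : (0 < mu N)%E := lt_le_trans hpos H. by rewrite N0 ltxx.
Qed.

Let tre i := RI mu (fun x => hr x * aY i x + hi x * bY i x).
Let tim i := RI mu (fun x => hi x * aY i x - hr x * bY i x).
Let w i : F := mkF isC ((sre (dv i) - tre i) / K) ((sim (dv i) - tim i) / K).
Definition phi x i : F :=
  if x \in Y then scj (g i x) else if x \in Z then scj (h x) * w i else 0.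

Let ZnY x : x \in Z -> (x \in Y) = false.
Proof. by move=> /set_mem [nY _]; apply/negbTE/negP => /set_mem. Qed.

Let r_eq x i : sre (phi x i) = aY i x + (sre (w i) * zr x + sim (w i) * zi x).
Proof.
rewrite /phi /aY /zr /zi; case: (boolP (x \in Y)) => xY.
  have xZ : (x \in Z) = false by apply/negbTE/negP => /ZnY; rewrite xY.
  by rewrite xZ sre_scj !mulr0 !addr0.
case: (boolP (x \in Z)) => xZ.
  by rewrite sre_mul sre_scj sim_scj /hr /hi; ring.
by rewrite sre0 !mulr0 !addr0.
Qed.

Let s_eq x i : sim (phi x i) = (-1) * bY i x + (sim (w i) * zr x + (- sre (w i)) * zi x).
Proof.
rewrite /phi /bY /zr /zi; case: (boolP (x \in Y)) => xY.
  have xZ : (x \in Z) = false by apply/negbTE/negP => /ZnY; rewrite xY.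
  by rewrite xZ sim_scj !mulr0 !addr0 mulN1r.
case: (boolP (x \in Z)) => xZ.
  by rewrite sim_mul sre_scj sim_scj /hr /hi; ring.
by rewrite sim0 !mulr0 !addr0.
Qed.

Let Lr i : L2f mu (fun x => sre (phi x i)).
Proof.
have -> : (fun x => sre (phi x i)) =
    (fun x => aY i x + (sre (w i) * zr x + sim (w i) * zi x)).
  by apply: funext => x; exact: r_eq.
apply: L2D; first exact: (LabY i).1.
by apply: L2D; apply: L2Z; [exact: Lz.1|exact: Lz.2].
Qed.

Let Ls i : L2f mu (fun x => sim (phi x i)).
Proof.
have -> : (fun x => sim (phi x i)) =
    (fun x => (-1) * bY i x + (sim (w i) * zr x + (- sre (w i)) * zi x)).
  by apply: funext => x; exact: s_eq.
apply: L2D; first by apply: L2Z; exact: (LabY i).2.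
by apply: L2D; apply: L2Z; [exact: Lz.1|exact: Lz.2].
Qed.

Let sre_hphi x i : sre (h x * phi x i) = (hr x * aY i x + hi x * bY i x) + sre (w i) * zh x.
Proof.
rewrite sre_mul r_eq s_eq /zh /zr /zi /hr /hi.
by case: (x \in Z); ring.
Qed.

Let sim_hphi x i : sim (h x * phi x i) = (hi x * aY i x - hr x * bY i x) + sim (w i) * zh x.
Proof.
rewrite sim_mul r_eq s_eq /zh /zr /zi /hr /hi.
by case: (x \in Z); ring.
Qed.

Let Ipart1 i : Int mu (fun x => hr x * aY i x + hi x * bY i x).
Proof. by apply: IntD; apply: L2_prod; [exact: Lh.1|exact: (LabY i).1|exact: Lh.2|exact: (LabY i).2]. Qed.
Let Ipart2 i : Int mu (fun x => hi x * aY i x - hr x * bY i x).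
Proof. by apply: IntB; apply: L2_prod; [exact: Lh.2|exact: (LabY i).1|exact: Lh.1|exact: (LabY i).2]. Qed.

Lemma phi_T : T_eq mu h phi dv.
Proof.
have KN0 : K != 0 by rewrite gt_eqF.
move=> i; split.
  rewrite (eq_integral (fun x => ((hr x * aY i x + hi x * bY i x) + sre (w i) * zh x)%:E)); last first.
    by move=> x _; rewrite sre_hphi.
  rewrite (intE (IntD (Ipart1 i) (IntZ _ Izh))) RID ?RIZ //; last exact: IntZ.
  rewrite -/K -/(tre i) sre_mkF; congr EFin; field; exact: KN0.
case/orP: (orbN isC) => hC.
  rewrite (eq_integral (fun x => ((hi x * aY i x - hr x * bY i x) + sim (w i) * zh x)%:E)); last first.
    by move=> x _; rewrite sim_hphi.
  rewrite (intE (IntD (Ipart2 i) (IntZ _ Izh))) RID ?RIZ //; last exact: IntZ.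
  rewrite -/K -/(tim i) sim_mkF //; congr EFin; field; exact: KN0.
rewrite (eq_integral (fun x => (0:R)%:E)); last by move=> x _; rewrite sim_real.
by rewrite integral0 sim_real.
Qed.

Let U (k : 'I_(n + n)) x :=
  match fintype.split k with inl j => aY j x | inr j => - bY j x end.
Let V (k : 'I_(n + n)) x :=
  match fintype.split k with inl j => bY j x | inr j => aY j x end.

Let LU k : L2f mu (U k).
Proof.
rewrite /U; case: (fintype.split k) => j; first exact: (LabY j).1.
have -> : (fun x => - bY j x) = (fun x => (-1) * bY j x).
  by apply: funext => x; rewrite mulN1r.
exact: L2Z (LabY j).2.
Qed.
Let LV k : L2f mu (V k).
Proof. by rewrite /V; case: (fintype.split k) => j; [exact: (LabY j).2|exact: (LabY j).1]. Qed.

Let sumU (c : 'I_(n + n) -> R) x : \sum_(k < n + n) c k * U k x =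
  \sum_(j < n) (c (lshift n j) * aY j x + c (rshift n j) * (- bY j x)).
Proof. by rewrite big_split_ord big_split /= /U; congr (_ + _); apply: eq_bigr => j _;
  rewrite ?split_l ?split_r. Qed.
Let sumV (c : 'I_(n + n) -> R) x : \sum_(k < n + n) c k * V k x =
  \sum_(j < n) (c (lshift n j) * bY j x + c (rshift n j) * aY j x).
Proof. by rewrite big_split_ord big_split /= /V; congr (_ + _); apply: eq_bigr => j _;
  rewrite ?split_l ?split_r. Qed.

Let indUV (c : 'I_(n + n) -> R) :
  {ae mu, forall x, \sum_(k < n + n) c k * U k x = 0 /\ \sum_(k < n + n) c k * V k x = 0} ->
  forall k, c k = 0.
Proof.
move=> H.
pose p j := c (lshift n j); pose q j := c (rshift n j).
suff claim : forall j, p j = 0 /\ q j = 0.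
  by move=> k; rewrite -(splitK k); case: (fintype.split k) => j /=;
    [exact: (claim j).1|exact: (claim j).2].
case/orP: (orbN isC) => hC.
  pose z j : F := mkF isC (p j) (q j).
  have := indg (c := z).
  have Hz : {ae mu, forall x, Y x -> \sum_(i < n) z i * g i x = 0}.
    apply: filterS H => x [e1 e2] Yx; apply: F_eq0.
      rewrite sre_sum -[RHS]e1 sumU; apply: eq_bigr => j _.
      by rewrite sre_mul sre_mkF sim_mkF // /aY /bY mem_set //; rewrite /a /b /p /q; ring.
    rewrite sim_sum -[RHS]e2 sumV; apply: eq_bigr => j _.
    by rewrite sim_mul sre_mkF sim_mkF // /aY /bY mem_set //; rewrite /a /b /p /q; ring.
  move=> /(_ Hz) z0 j; split.
    by have := z0 j; move/(congr1 (@sre R F)); rewrite sre_mkF sre0.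
  by have := z0 j; move/(congr1 (@sim R F)); rewrite sim_mkF // sim0.
have bY0 : forall j x, bY j x = 0.
  by move=> j x; rewrite /bY; case: (x \in Y) => //; rewrite /b sim_real.
pose z j : F := mkF isC (p j) 0.
pose z' j : F := mkF isC (q j) 0.
have Hz : {ae mu, forall x, Y x -> \sum_(i < n) z i * g i x = 0}.
  apply: filterS H => x [e1 e2] Yx; apply: F_eq0; last by rewrite sim_real.
  rewrite sre_sum -[RHS]e1 sumU; apply: eq_bigr => j _.
  rewrite sre_mul sre_mkF (sim_real (z j)) // bY0 /aY mem_set //; rewrite /a /p; ring.
have Hz' : {ae mu, forall x, Y x -> \sum_(i < n) z' i * g i x = 0}.
  apply: filterS H => x [e1 e2] Yx; apply: F_eq0; last by rewrite sim_real.
  rewrite sre_sum -[RHS]e2 sumV; apply: eq_bigr => j _.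
  rewrite sre_mul sre_mkF (sim_real (z' j)) // bY0 /aY mem_set //; rewrite /a /q; ring.
move=> j; split.
  by have := indg Hz j; move/(congr1 (@sre R F)); rewrite sre_mkF sre0.
by have := indg Hz' j; move/(congr1 (@sre R F)); rewrite sre_mkF sre0.
Qed.

Lemma phi_frame : continuous_frame mu phi.
Proof.
split; first by move=> i; split; [exact: (Lr i).1|exact: (Ls i).1].
have [A Apos HA] := RL LU LV indUV.
pose nphi x := \sum_(j < n) (sre (phi x j) ^+ 2 + sim (phi x j) ^+ 2).
have Inphi : Int mu nphi.
  exact: (Int_sum (F := fun j x => sre (phi x j) ^+ 2 + sim (phi x j) ^+ 2))
           (fun j => IntD (Lr j).2 (Ls j).2).
exists A, (Num.max A (2 * RI mu nphi)); split => //; split; first by rewrite le_max lexx.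
move=> v.
pose p j := sre (v j); pose q j := sim (v j).
have nv : normsq v = nsq p + nsq q by rewrite /normsq /absq big_split.
have absE : forall x, absq (inner v (phi x)) =
   (\sum_(j < n) (p j * sre (phi x j) + q j * sim (phi x j))) ^+ 2
 + (\sum_(j < n) (q j * sre (phi x j) - p j * sim (phi x j))) ^+ 2.
  by move=> x; rewrite /absq sre_inner sim_inner.
have Iabs : Int mu (fun x => absq (inner v (phi x))).
  apply: Int_ext (fun x => esym (absE x)) _; apply: IntD.
    exact: (L2_sum (F := fun j x => p j * sre (phi x j) + q j * sim (phi x j))
             (fun j => L2D (L2Z' (p j) (Lr j)) (L2Z' (q j) (Ls j)))).2.
  exact: (L2_sum (F := fun j x => q j * sre (phi x j) - p j * sim (phi x j))
           (fun j => L2B (L2Z' (q j) (Lr j)) (L2Z' (p j) (Ls j)))).2.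
split.
  pose c k := match fintype.split k with inl j => p j | inr j => q j end.
  have cl : forall j, c (lshift n j) = p j by move=> j; rewrite /c split_l.
  have cr : forall j, c (rshift n j) = q j by move=> j; rewrite /c split_r.
  have nc : nsq c = normsq v.
    by rewrite nv /nsq big_split_ord; congr (_ + _); apply: eq_bigr => j _; rewrite ?cl ?cr.
  rewrite -nc; apply: le_trans (HA c) _.
  apply: le_integral => //.
    apply: IntD.
      exact: (L2_sum (F := fun k x => c k * U k x) (fun k => L2Z' (c k) (LU k))).2.
    exact: (L2_sum (F := fun k x => c k * V k x) (fun k => L2Z' (c k) (LV k))).2.
  move=> x _; rewrite lee_fin sumU sumV absE.
  under eq_bigr do rewrite cl cr.
  under [X in _ + X ^+ 2 <= _]eq_bigr do rewrite cl cr.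
  case: (boolP (x \in Y)) => xY; last first.
    have e1 : \sum_(j < n) (p j * aY j x + q j * - bY j x) = 0.
      by apply: big1 => j _; rewrite /aY /bY (negbTE xY); ring.
    have e2 : \sum_(j < n) (p j * bY j x + q j * aY j x) = 0.
      by apply: big1 => j _; rewrite /aY /bY (negbTE xY); ring.
    by rewrite e1 e2 expr0n addr0 addr_ge0 ?sqr_ge0.
  have xZ : (x \in Z) = false by apply/negbTE/negP => /ZnY; rewrite xY.
  rewrite le_eqVlt; apply/orP; left; apply/eqP.
  by congr (_ ^+ 2 + _ ^+ 2); apply: eq_bigr => j _; rewrite r_eq s_eq /zr /zi xZ; ring.
have nv0 : 0 <= normsq v by rewrite nv addr_ge0 ?nsq_ge0.
apply: (@le_trans _ _ ((2 * normsq v * RI mu nphi)%:E)).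
  have -> : ((2 * normsq v * RI mu nphi)%:E = \int[mu]_x ((2 * normsq v) * nphi x)%:E)%E.
    by rewrite (intE (IntZ _ Inphi)) RIZ.
  apply: le_integral => //; first exact: IntZ.
  move=> x _; rewrite lee_fin absE nv /nphi [X in _ <= _ * X]big_split /= -mulrA.
  exact: (bound4 p q (fun j => sre (phi x j)) (fun j => sim (phi x j))).
rewrite lee_fin.
have -> : 2 * normsq v * RI mu nphi = (2 * RI mu nphi) * normsq v by ring.
by apply: ler_wpM2r => //; rewrite le_max lexx orbT.
Qed.

End Main.

Theorem proposition5p7 (R : realType) (isC : bool)
    (d : measure_display) (X : measurableType d)
    (mu : {measure set X -> \bar R}) (n : nat) (hn : (1 <= n)%N)
    (h : X -> field_of R isC)
    (hL2 : in_L2_on mu setT h)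
    (Y : set X) (mY : measurable Y)
    (hdim : L2_dim_ge (field_of R isC) mu Y n)
    (hpos : (0 < mu (~` Y `&` [set x | (h x != 0)%R]))%E) :
  forall dv : 'I_n -> field_of R isC,
    exists phi : X -> 'I_n -> field_of R isC,
      continuous_frame mu phi /\ T_eq mu h phi dv.
Proof.
move=> dv; case: hdim => g [Lg indg].
exists (phi mu h Y g dv); split.
  exact: phi_frame.
exact: phi_T.
Qed.
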